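(* Let $G=(V,E)$ be a graph with maximum degree at most $\Delta$, let $\beta>20$ with $L=\log_\beta\Delta$ an integer, let $\ell:V\to\{4,\dots,L\}$ be any level assignment, and let $\chi:V\to\mathcal{C}=\{1,\dots,\Delta+1\}$ be any coloring. For any vertex $x$ with $\ell(x)=i$, we have $|B_x\cup U_x|\ge 1+\frac{|\mathcal{N}_x(4,i-1)|}{2}$.
   Context: For a vertex $v$ and $i\le j$, $\mathcal{N}_v(i,j)=\{u:(u,v)\in E,\ i\le\ell(u)\le j\}$ (empty if $i>j$). For a vertex $x$ at level $i=\ell(x)$: $\mathcal{C}^+_x=\{\chi(y): y\in\mathcal{N}_x(i,L)\}$ and $\mathcal{C}_x=\mathcal{C}\setminus\mathcal{C}^+_x$. A color $c\in\mathcal{C}_x$ is blank for $x$ if no vertex of $\mathcal{N}_x(4,i-1)$ has color $c$, and unique for $x$ if exactly one vertex of $\mathcal{N}_x(4,i-1)$ has color $c$. $B_x$ and $U_x$ denote the sets of blank and unique colors for $x$, respectively. *)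

(* Defs.v *)
From HB Require Import structures.
From mathcomp Require Import all_boot all_order all_algebra.
Set Implicit Arguments. Unset Strict Implicit. Unset Printing Implicit Defensive.
Import Order.TTheory GRing.Theory Num.Theory.

(* Graph: vertex type T : finType, edge relation e : rel T (simple graph:
   symmetric and irreflexive).
   Coloring col : T -> 'I_(Delta.+1)  (colour c <-> paper's colour c+1). *)

Section Defs.
Variables (T : finType) (e : rel T) (lev : T -> nat).

Definition Nset (v : T) (i j : nat) : {set T} :=
  [set u | e u v & (i <= lev u <= j)%N].

Variables (Delta L : nat) (col : T -> 'I_Delta.+1).

Definition Cplus (x : T) : {set 'I_Delta.+1} :=
  [set col y | y in Nset x (lev x) L].

Definition Cx (x : T) : {set 'I_Delta.+1} := ~: Cplus x.

Definition lowcount (x : T) (c : 'I_Delta.+1) : nat :=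
  #|[set u in Nset x 4 (lev x).-1 | col u == c]|.

Definition blank (x : T) : {set 'I_Delta.+1} :=
  [set c in Cx x | lowcount x c == 0%N].

Definition unique (x : T) : {set 'I_Delta.+1} :=
  [set c in Cx x | lowcount x c == 1%N].

End Defs.

(* Main.v *)
Require Import Defs.
From HB Require Import structures.
From mathcomp Require Import all_boot all_order all_algebra.
From mathcomp Require Import zify.
Import Order.TTheory GRing.Theory Num.Theory.
Local Open Scope ring_scope.

Lemma claim2_nat (T : finType) (e : rel T)
  (Delta : nat) (maxdeg : forall v : T, (#|[set u | e u v]| <= Delta)%N)
  (L : nat) (lev : T -> nat) (hlev : forall v : T, (4 <= lev v <= L)%N)
  (col : T -> 'I_Delta.+1) (x : T) :
  (#|Nset e lev x 4 (lev x).-1| + 2 <= 2 * #|blank e lev L col x :|: unique e lev L col x|)%N.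
Proof.
set N := Nset e lev x 4 (lev x).-1.
set H := Nset e lev x (lev x) L.
set BU := blank e lev L col x :|: unique e lev L col x.
set C := Cx e lev L col x.
have hx := hlev x.
have NH : (#|N| + #|H| <= Delta)%N.
  rewrite -cardsUI.
  have -> : N :&: H = set0.
    apply/setP => u; rewrite /N /H /Nset !inE.
    case: (e u x) => //=; lia.
  rewrite cards0 addn0; apply: leq_trans (maxdeg x); apply: subset_leq_card.
  apply/subsetP => u; rewrite /N /H /Nset !inE; by case/orP=> /andP[].
have HC : (Delta.+1 <= #|C| + #|H|)%N.
  rewrite /C /Cx cardsCs setCK card_ord.
  have : (#|Cplus e lev L col x| <= #|H|)%N by apply: leq_imset_card.
  have : (#|Cplus e lev L col x| <= Delta.+1)%N by rewrite -[X in (_ <= X)%N]card_ord max_card.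
  lia.
have BUC : BU \subset C.
  apply/subsetP => c; rewrite !inE; by case/orP => /andP[].
set D := C :\: BU.
have CD : #|C| = (#|BU| + #|D|)%N.
  rewrite cardsD (setIidPr BUC).
  have := subset_leq_card BUC; lia.
have D2 : forall c, c \in D -> (2 <= lowcount e lev col x c)%N.
  move=> c; rewrite !inE negb_or => /andP[/andP[nb nu] cC].
  move: nb nu; rewrite cC /=; lia.
have sumN : (\sum_(c in D) lowcount e lev col x c <= #|N|)%N.
  have -> : #|N| = (\sum_(c : 'I_Delta.+1) lowcount e lev col x c)%N.
    rewrite -sum1_card (partition_big col predT) //=.
    apply: eq_bigr => c _; rewrite /lowcount -sum1_card.
    by apply: eq_bigl => u; rewrite !inE.
  rewrite [X in (_ <= X)%N](bigID (mem D)) /=; exact: leq_addr.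
have D2' : (2 * #|D| <= #|N|)%N.
  apply: leq_trans sumN.
  rewrite -sum1_card big_distrr /=; apply: leq_sum => c /D2; by rewrite muln1.
lia.
Qed.

Theorem claim2 (R : realFieldType) (T : finType) (e : rel T)
  (e_sym : symmetric e) (e_irr : irreflexive e)
  (Delta : nat) (maxdeg : forall v : T, (#|[set u | e u v]| <= Delta)%N)
  (beta : R) (beta_gt : 20 < beta) (L : nat) (hL : beta ^+ L = Delta%:R)
  (lev : T -> nat) (hlev : forall v : T, (4 <= lev v <= L)%N)
  (col : T -> 'I_Delta.+1) (x : T) :
  1 + (#|Nset e lev x 4 (lev x).-1|)%:R / 2
    <= (#|blank e lev L col x :|: unique e lev L col x|)%:R :> R.
Proof.
have h := @claim2_nat T e Delta maxdeg L lev hlev col x.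
move: h; set n := #|Nset _ _ _ _ _|; set m := #|_ :|: _| => h.
rewrite -(ler_pM2r (_ : 0 < 2%:R :> R)) //.
rewrite mulrDl mul1r mulfVK ?pnatr_eq0 //.
rewrite -natrM -natrD ler_nat; lia.
Qed.
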